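(* Let $(X,\|\cdot\|_X)$ be a Banach space, let $\mathcal{K}\subset X$ be compact and let $n\in\mathbb{N}$. Then the function $\gamma\mapsto d_n^\gamma(\mathcal{K})_X$ is continuous on $[0,\infty)$.
   Context: For $k\ge1$ and a norm $\|\cdot\|_{Y_k}$ on $\mathbb{R}^k$ let $B_{Y_k}=\{y\in\mathbb{R}^k:\|y\|_{Y_k}\le1\}$. For $\mathcal{K}\subset X$ and $\gamma\ge0$, the fixed Lipschitz width is $d^\gamma(\mathcal{K},Y_k)_X=\inf_{\Phi}\sup_{f\in\mathcal{K}}\inf_{y\in B_{Y_k}}\|f-\Phi(y)\|_X$, the infimum being over all maps $\Phi:B_{Y_k}\to X$ with $\|\Phi(y)-\Phi(y')\|_X\le\gamma\|y-y'\|_{Y_k}$ for all $y,y'\in B_{Y_k}$. The Lipschitz width is $d_n^\gamma(\mathcal{K})_X=\inf_{1\le k\le n}\inf_{\|\cdot\|_{Y_k}}d^\gamma(\mathcal{K},Y_k)_X$, where the inner infimum is over all norms on $\mathbb{R}^k$. *)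

(* Defs.v *)
From HB Require Import structures.
From mathcomp Require Import all_boot all_order all_algebra.
From mathcomp Require Import all_classical all_reals all_analysis.
Set Implicit Arguments. Unset Strict Implicit. Unset Printing Implicit Defensive.
Import Order.TTheory GRing.Theory Num.Theory.
Import numFieldNormedType.Exports.
Local Open Scope classical_set_scope.
Local Open Scope ring_scope.

Definition is_norm (R : realType) (k : nat) (N : 'rV[R]_k -> R) : Prop :=
  [/\ (forall x, N x = 0 -> x = 0),
      (forall (a : R) x, N (a *: x) = `|a| * N x) &
      (forall x y, N (x + y) <= N x + N y)].

Definition lip_on_ball (R : realType) (X : normedModType R) (k : nat)
  (N : 'rV[R]_k -> R) (gamma : R) (Phi : 'rV[R]_k -> X) : Prop :=
  forall y y', N y <= 1 -> N y' <= 1 -> `|Phi y - Phi y'| <= gamma * N (y - y').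

Definition fixed_lip_width (R : realType) (X : normedModType R) (K : set X)
  (k : nat) (N : 'rV[R]_k -> R) (gamma : R) : \bar R :=
  ereal_inf [set ereal_sup [set ereal_inf [set (`|f - Phi y|)%:E | y in [set y | N y <= 1]]
                           | f in K]
            | Phi in [set Phi | lip_on_ball N gamma Phi]].

Definition lip_width (R : realType) (X : normedModType R) (K : set X)
  (n : nat) (gamma : R) : \bar R :=
  ereal_inf [set w | exists k : nat, exists N : 'rV[R]_k -> R,
     [/\ (1 <= k <= n)%N, is_norm N & w = fixed_lip_width K N gamma]].

(* Main.v *)
Require Import Defs.
From HB Require Import structures.
From mathcomp Require Import all_boot all_order all_algebra.
From mathcomp Require Import all_classical all_reals all_analysis.
Import Order.TTheory GRing.Theory Num.Theory.
Import numFieldNormedType.Exports.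
Local Open Scope classical_set_scope.
Local Open Scope ring_scope.

Section Aux.
Variables (R : realType) (X : normedModType R) (K : set X).

Lemma isn0 {k} {N : 'rV[R]_k -> R} : is_norm N -> N 0 = 0.
Proof. case=> _ hZ _; by rewrite -(scale0r (0 : 'rV[R]_k)) hZ normr0 mul0r. Qed.

Lemma isn_ge0 {k} {N : 'rV[R]_k -> R} : is_norm N -> forall x, 0 <= N x.
Proof.
move=> hN x; have h0 := isn0 hN; case: hN => _ hZ hT.
have := hT x (- x); rewrite subrr h0 -scaleN1r hZ normrN normr1 mul1r.
by move=> h; rewrite -(@pmulr_rge0 _ 2) // mulr2n mulrDl mul1r.
Qed.

Lemma fixed_mono {k} {N : 'rV[R]_k -> R} a b : is_norm N -> 0 <= a -> a <= b ->
  (fixed_lip_width K N b <= fixed_lip_width K N a)%E.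
Proof.
move=> hN a0 ab; apply: ereal_inf_le_tmp => _ [Phi HPhi <-]; exists Phi => //.
move=> y y' hy hy'; apply: le_trans (HPhi y y' hy hy') _.
by rewrite ler_wpM2r // isn_ge0.
Qed.

Lemma fixed_lip {k} {N : 'rV[R]_k -> R} a b : is_norm N -> 0 <= a -> a <= b ->
  (fixed_lip_width K N a <= fixed_lip_width K N b + (b - a)%:E)%E.
Proof.
move=> hN a0 ab.
have [->|neab] := eqVneq a b; first by rewrite subrr adde0.
have b0 : 0 < b by apply: le_lt_trans a0 _; rewrite lt_neqAle neab ab.
rewrite -leeBlDr //; apply: le_ereal_inf_tmp => _ [Phi HPhi <-].
pose t := a / b.
have t0 : 0 <= t by rewrite divr_ge0 // ltW.
have t1 : 1 - t = (b - a) / b by rewrite mulrBl divff ?gt_eqF.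
pose Phi' y := Phi 0 + t *: (Phi y - Phi 0).
have H' : lip_on_ball N a Phi'.
  move=> y y' hy hy'; rewrite /Phi'.
  have -> : Phi 0 + t *: (Phi y - Phi 0) - (Phi 0 + t *: (Phi y' - Phi 0)) = t *: (Phi y - Phi y').
    by rewrite opprD addrACA subrr add0r -scalerBr opprB addrA subrK.
  rewrite normrZ ger0_norm //; apply: le_trans (ler_wpM2l t0 (HPhi y y' hy hy')) _.
  by rewrite mulrA /t divfK ?gt_eqF.

have hS : (fixed_lip_width K N a <=
   ereal_sup [set ereal_inf [set (`|f - Phi' y|)%:E | y in [set y | (N y <= 1)%R]]
                           | f in K])%E.
  by apply: ereal_inf_lbound; exists Phi'.
move: hS; set S' := ereal_sup _ => hS.
have h2 : (fixed_lip_width K N a - (b - a)%:E <= S' - (b - a)%:E)%E.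
  by rewrite leeBlDr // subeK.
apply: le_trans h2 _.
rewrite leeBlDr //; apply: ge_ereal_sup => _ [f Kf <-].
apply: (@le_trans _ _ (ereal_inf [set (`|f - Phi y|)%:E | y in [set y | (N y <= 1)%R]] + (b - a)%:E)%E).
  rewrite -leeBlDr //; apply: le_ereal_inf_tmp => _ [y hy <-].
  rewrite leeBlDr //; apply: (@le_trans _ _ ((`|f - Phi' y|)%:E)%E).
    by apply: ereal_inf_lbound; exists y.
  rewrite -EFinD lee_fin.
  have -> : f - Phi' y = (f - Phi y) + (1 - t) *: (Phi y - Phi 0).
    rewrite /Phi' scalerBl scale1r.
    by rewrite opprD addrA [in RHS]addrA; congr (_ - _); rewrite addrC addrA subrK addrC.
  apply: le_trans (ler_normD _ _) _; rewrite lerD2l normrZ t1.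
  rewrite ger0_norm; last by rewrite divr_ge0 ?subr_ge0 // ltW.
  have := HPhi y 0 hy; rewrite isn0 // ler01 subr0 => /(_ isT) h.
  rewrite -[leRHS](@divfK _ b) ?gt_eqF //.
  apply: ler_wpM2l; first by rewrite divr_ge0 ?subr_ge0 // ltW.
  by apply: le_trans h _; rewrite ler_piMr // ltW.
by rewrite leeD2r //; apply: ereal_sup_ubound; exists f.
Qed.

End Aux.

Section Aux2.
Variables (R : realType) (X : normedModType R) (K : set X) (n : nat).
Let W := fun gamma : R => lip_width K n gamma.

Lemma lw_mono {a b} : 0 <= a -> a <= b -> (W b <= W a)%E.
Proof.
move=> a0 ab; apply: le_ereal_inf_tmp => _ [k [N [hk hN ->]]].
rewrite (le_trans _ (fixed_mono _ _ K _ _ hN a0 ab)) //.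
by apply: ereal_inf_lbound; exists k, N; split.
Qed.

Lemma lw_lip {a b} : 0 <= a -> a <= b -> (W a <= W b + (b - a)%:E)%E.
Proof.
move=> a0 ab; rewrite -leeBlDr //; apply: le_ereal_inf_tmp => _ [k [N [hk hN ->]]].
rewrite leeBlDr //; rewrite (le_trans _ (fixed_lip _ _ K _ _ hN a0 ab)) //.
by apply: ereal_inf_lbound; exists k, N; split.
Qed.

Lemma lw_py {x y} : 0 <= x -> 0 <= y -> W x = +oo%E -> W y = +oo%E.
Proof.
move=> x0 y0 hx; case/orP: (le_total x y) => [xy|yx].
  have := lw_lip x0 xy; rewrite hx; case: (W y) => //.
have := lw_mono y0 yx; rewrite hx; case: (W y) => //.
Qed.

Lemma lw_ny {x y} : 0 <= x -> 0 <= y -> W x = -oo%E -> W y = -oo%E.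
Proof.
move=> x0 y0 hx; case/orP: (le_total x y) => [xy|yx].
  have := lw_mono x0 xy; rewrite hx; case: (W y) => //.
have := lw_lip y0 yx; rewrite hx; case: (W y) => //.
Qed.

Lemma lw_fine x y rx ry : 0 <= x -> 0 <= y -> W x = rx%:E -> W y = ry%:E ->
  `|rx - ry| <= `|x - y|.
Proof.
wlog xy : x y rx ry / x <= y.
  move=> hw x0 y0 hx hy; case/orP: (le_total x y) => [xy|yx]; first exact: hw.
  by rewrite distrC [`|x - y|]distrC; apply: hw.
move=> x0 y0 hx hy.
have h1 := lw_mono x0 xy; have h2 := lw_lip x0 xy.
rewrite hx hy -EFinD !lee_fin in h1 h2.
rewrite ger0_norm ?subr_ge0 // distrC ger0_norm ?subr_ge0 //.
by rewrite lerBlDr addrC.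
Qed.

End Aux2.
Arguments lw_py {R X K n x y}.
Arguments lw_ny {R X K n x y}.
Arguments lw_fine {R X K n}.

Theorem theorem2p5 (R : realType) (X : completeNormedModType R) (K : set X) (n : nat) :
  compact K ->
  {within `[0, +oo[, continuous (fun gamma : R => lip_width K n gamma)}.
Proof.
move=> _; apply/subspace_continuousP => g; rewrite /= in_itv /= andbT => g0.
have nearA : \forall x \near within `[0, +oo[ (nbhs g), 0 <= x.
  apply: filterS (withinT _ _) => x; by rewrite /= in_itv /= andbT.
case E: (lip_width K n g) => [r| |].
- rewrite /from_subspace /= E; apply: cvg_EFin.
    apply: filterS nearA => x x0.
    case Ex: (lip_width K n x) => [rx| |] //.
      by rewrite (lw_py x0 g0 Ex) in E.
    by rewrite (lw_ny x0 g0 Ex) in E.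
  apply/cvgrPdist_le => e e0.
  have nB : \forall x \near g, `|g - x| < e.
    by apply/nbhs_ballP; exists e => //= x; rewrite /ball /=.
  apply: filterS2 nearA (cvg_within _ nB) => x x0 hx /=.
  case Ex: (lip_width K n x) => [rx| |].
  - by apply: le_trans (lw_fine _ _ _ _ g0 x0 E Ex) _; apply: ltW.
  - by rewrite (lw_py x0 g0 Ex) in E.
  - by rewrite (lw_ny x0 g0 Ex) in E.
- rewrite /from_subspace /= E; apply: cvg_near_cst.
  by apply: filterS nearA => x x0; apply: lw_py g0 x0 E.
- rewrite /from_subspace /= E; apply: cvg_near_cst.
  by apply: filterS nearA => x x0; apply: lw_ny g0 x0 E.
Qed.
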